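(* Let $K$ be an algebraically closed field of characteristic zero, $\mathcal{K}=K(t)$, $\alpha \in \mathcal{K}$, and $M \ge 0$. Let \[\phi_1(z) = -\frac{t(z+1)}{z-(t-1)}.\] Then $\alpha$ fails to realize portrait $(M,1)$ for $f_2(z) = z^2+t$ if and only if $M = 1$ and $\alpha \in \mathcal{O}_{\phi_1}(0)\cup\mathcal{O}_{\phi_1}(\infty)$. Moreover, for each $k\ge0$, $h(\phi_1^k(0)) = h(\phi_1^k(\infty)) = k$.
   Context: $\phi_1$ is viewed as a self-map of $\mathbb{P}^1(\mathcal{K})$ and $\mathcal{O}_{\phi_1}(x) = \{\phi_1^k(x): k\ge0\}$. The height $h$ of an element of $K(t)$ is its degree as a rational function in $t$, with $h(\infty)=0$. For $c \in K$, $f_{2,c}(z) = z^2+c$. A point $x$ has preperiodic portrait $(M,N)$ for $\phi$ if $M\ge0$ is minimal with $\phi^M(x)$ periodic and $\phi^M(x)$ has exact period $N$. We say $\alpha$ realizes portrait $(M,N)$ for $f_2$ if there exists $c \in K$ such that $\alpha(c)$ (reduction modulo the place $t=c$) has portrait $(M,N)$ for $f_{2,c}$. *)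

(* Defs.v *)
From HB Require Import structures.
From mathcomp Require Import all_boot all_order all_algebra.
Set Implicit Arguments. Unset Strict Implicit. Unset Printing Implicit Defensive.
Import Order.TTheory GRing.Theory Num.Theory.
Local Open Scope ring_scope.

(* The rational function field  K(t) = Frac(K[t]);  the variable t is 'X. *)
Definition Kt (K : closedFieldType) := {fraction {poly K}}.

Definition fracpq (K : closedFieldType) (p q : {poly K}) : Kt K :=
  FracField.tofrac p / FracField.tofrac q.

Definition tK (K : closedFieldType) : Kt K := FracField.tofrac 'X.

(* P^1(K(t)) = option (K(t)), with None the point at infinity. *)
Definition phi1 (K : closedFieldType) (z : option (Kt K)) : option (Kt K) :=
  match z with
  | None => Some (- tK K)
  | Some w =>
      if w - (tK K - 1) == 0 then None
      else Some (- (tK K * (w + 1)) / (w - (tK K - 1)))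
  end.

Definition phi1_orbit (K : closedFieldType) (x y : option (Kt K)) : Prop :=
  exists k : nat, iter k (@phi1 K) x = y.

(* Height: h(alpha) = degree of alpha as a rational function in t, i.e.
   max(deg p, deg q) for alpha = p/q in lowest terms;  h(infty) = 0. *)
Definition has_height (K : closedFieldType) (x : option (Kt K)) (n : nat) : Prop :=
  match x with
  | None => n = 0%N
  | Some a => exists p q : {poly K}, [/\ q != 0, coprimep p q,
                a = fracpq p q & n = maxn (size p).-1 (size q).-1]
  end.

(* Reduction of alpha modulo the place t = c (finite value):
   alpha(c) = v  iff alpha = p/q with q(c) <> 0 and v = p(c)/q(c). *)
Definition eval_at (K : closedFieldType) (a : Kt K) (c v : K) : Prop :=
  exists p q : {poly K}, [/\ q.[c] != 0, a = fracpq p q & v = p.[c] / q.[c]].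

Definition periodic (T : Type) (f : T -> T) (y : T) : Prop :=
  exists n : nat, (0 < n)%N /\ iter n f y = y.

Definition exact_period (T : Type) (f : T -> T) (y : T) (N : nat) : Prop :=
  [/\ (0 < N)%N, iter N f y = y & forall n : nat, (0 < n < N)%N -> iter n f y <> y].

Definition has_portrait (T : Type) (f : T -> T) (x : T) (M N : nat) : Prop :=
  [/\ periodic f (iter M f x),
      (forall m : nat, (m < M)%N -> ~ periodic f (iter m f x))
    & exact_period f (iter M f x) N].

Definition f2 (K : closedFieldType) (c : K) (z : K) : K := z ^+ 2 + c.

Definition realizes (K : closedFieldType) (a : Kt K) (M N : nat) : Prop :=
  exists c v : K, eval_at a c v /\ has_portrait (f2 c) v M N.

(* Main.v *)
Require Import Defs.
From HB Require Import structures.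
From mathcomp Require Import all_boot all_order all_algebra.
From mathcomp Require Import zify ring.
From Stdlib Require Import Classical.
Import Order.TTheory GRing.Theory Num.Theory.
Local Open Scope ring_scope.
Set Implicit Arguments. Unset Strict Implicit. Unset Printing Implicit Defensive.

Lemma frac_rep (R : idomainType) (x : {fraction R}) :
  exists p q : R, q != 0 /\ x = FracField.tofrac p / FracField.tofrac q.
Proof.
exists (\n_(repr x)), (\d_(repr x)); split; first exact: denom_ratioP.
rewrite -[x in LHS]reprK.
set r := repr x.
have hd := denom_ratioP r.
unlock FracField.tofrac.
rewrite -[r in LHS]Ratio_numden.
rewrite -[_ / _]/(FracField.mul _ (FracField.inv _)).
rewrite -FracField.pi_inv -FracField.pi_mul.
apply/eqmodP; rewrite /= FracField.equivfE /FracField.mulf /FracField.invf.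
by rewrite !numden_Ratio ?oner_neq0 ?mulr1 ?mul1r // mulrC.
Qed.

Section S1.
Variable K : closedFieldType.
Implicit Types P Q R A B C D : {poly K}.
Local Notation "x %:F" := (FracField.tofrac x).

Lemma tofrac_neq0 A : A != 0 -> A%:F != 0 :> Kt K.
Proof. by rewrite tofrac_eq0. Qed.

Lemma fracpq_eq A B C D : B != 0 -> D != 0 ->
  (fracpq A B = fracpq C D) <-> (A * D = C * B).
Proof.
move=> B0 D0; rewrite /fracpq.
have hB := tofrac_neq0 B0; have hD := tofrac_neq0 D0.
split=> h.
  apply/eqP; rewrite -tofrac_eq !tofracM; apply/eqP.
  move: h => /eqP; rewrite (@eqr_div (Kt K) _ _ _ _ hB hD) => /eqP h. exact h.
have e : A%:F * D%:F = C%:F * B%:F :> Kt K by rewrite -!tofracM h.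
apply/eqP. 
rewrite (@eqr_div (Kt K) _ _ _ _ hB hD).
apply/eqP. exact e.
Qed.

Lemma crep (a : Kt K) : exists P Q, [/\ Q != 0, coprimep P Q & a = fracpq P Q].
Proof.
have [p [q [q0 ->]]] := frac_rep a.
set g := gcdp p q.
have g0 : g != 0 by rewrite gcdp_eq0 negb_and q0 orbT.
have hp : p %/ g * g = p by rewrite divpK // dvdp_gcdl.
have hq : q %/ g * g = q by rewrite divpK // dvdp_gcdr.
have Q0 : q %/ g != 0 by apply: contraNneq q0 => h; rewrite -hq h mul0r.
exists (p %/ g), (q %/ g); split.
- exact Q0.
- by apply: coprimep_div_gcd; rewrite q0 orbT.
apply/(fracpq_eq _ _ q0 Q0).
by rewrite -{1}hp -{2}hq; ring.
Qed.

Lemma eval_crep a P Q c v : Q != 0 -> coprimep P Q -> a = fracpq P Q ->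
  eval_at a c v -> Q.[c] != 0 /\ v = P.[c] / Q.[c].
Proof.
move=> Q0 cPQ -> [p [q [qc e ->]]].
have q0 : q != 0 by apply: contraNneq qc => ->; rewrite horner0.
have h : p * Q = P * q by apply/(fracpq_eq _ _ q0 Q0).
have dQ : Q %| q.
  have cQP : coprimep Q P by rewrite coprimep_sym.
  rewrite -(Gauss_dvdpl q cQP) mulrC -h.
  exact: (dvdp_mull p (dvdpp Q)).
have Qc : Q.[c] != 0.
  move: qc; rewrite -(divpK dQ) hornerM; apply: contraNneq => ->.
  by rewrite mulr0.
split; first exact Qc.
have hc : p.[c] * Q.[c] = P.[c] * q.[c] by rewrite -!hornerM h.
apply/eqP; rewrite eqr_div //; apply/eqP; rewrite hc; ring.
Qed.

Lemma size_H P Q R : Q != 0 -> (size R <= (size P + size Q).-1)%N ->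
  size (P * P + R + 'X * (Q * Q)) =
  if (size P <= size Q)%N then (size Q * 2)%N else ((size P * 2).-1)%N.
Proof.
move=> Q0 hR.
have sQ : (0 < size Q)%N by rewrite size_poly_gt0.
have QQ0 : Q * Q != 0 by rewrite mulf_neq0.
have sQQ : size (Q * Q) = ((size Q * 2).-1)%N.
  by rewrite size_mul //; set n := size Q; lia.
have sC : size ('X * (Q * Q)) = (size Q * 2)%N.
  by rewrite mulrC size_mulX // sQQ; set n := size Q; lia.
have sA : (size (P * P)%R <= (size P * 2).-1)%N.
  by apply: leq_trans (size_mul_leq P P) _; set n := size P; lia.
have hD := size_polyD (P * P) R.
have hD2 := size_polyD R ('X * (Q * Q)).
move: hR hD hD2 sA sQ sC.
set a := size (P * P); set r := size R; set c := size ('X * _).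
set pr := size (_ + R); set rc := size (R + _).
set sp := size P; set sq := size Q => hR hD hD2 sA sQ sC.
case: ifP => hPQ.
  rewrite addrC size_polyDl -/c -/pr; lia.
have P0 : P != 0 by rewrite -size_poly_gt0; lia.
have sA' : a = ((sp * 2).-1)%N by rewrite /a size_mul // -/sp; lia.
rewrite -addrA size_polyDl -/a -/rc; lia.
Qed.

Definition Hq P Q := P * P + P * Q + 'X * (Q * Q).

Definition Sform P Q (n : nat) :=
  [/\ Q != 0, coprimep P Q, P.[0] = 0 & exists2 l : K, l != 0 & Hq P Q = l *: 'X^n].

Lemma size_Hq P Q : Q != 0 ->
  size (Hq P Q) = if (size P <= size Q)%N then (size Q * 2)%N else ((size P * 2).-1)%N.
Proof. by move=> Q0; rewrite size_H // size_mul_leq. Qed.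

Lemma Sform_size P Q n : Sform P Q n -> size (Hq P Q) = n.+1.
Proof. by case=> _ _ _ [l l0 ->]; rewrite size_scale // size_polyXn. Qed.

Lemma Q0_neq0 P Q : coprimep P Q -> P.[0] = 0 -> Q.[0] != 0.
Proof. by move=> c h; apply: (coprimep_root c); rewrite /root h. Qed.

Lemma rootX P : P.[0] = 0 -> exists P', P = 'X * P'.
Proof.
move=> h; have /factor_theorem [q ->] : root P 0 by rewrite /root h.
by exists q; rewrite subr0 mulrC.
Qed.

Lemma mulXI A B : 'X * A = 'X * B -> A = B.
Proof. by apply: mulfI; rewrite polyX_eq0. Qed.

Lemma S_n1 P Q : Sform P Q 1 -> P = 0.
Proof.
move=> S; have [Q0 _ P0 _] := S.
have := Sform_size S; rewrite size_Hq //.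
have sQ : (0 < size Q)%N by rewrite size_poly_gt0.
case: ifP => h e; last by move: e; set a := size P; lia.
have hP : (size P <= 1)%N by move: h e sQ; set a := size P; set b := size Q; lia.
by rewrite (size1_polyC hP) -horner_coef0 P0.
Qed.
End S1.

Lemma gen1 (F : fieldType) (a b x : F) : b != 0 -> a / b - (x - 1) = (a - (x - 1) * b) / b.
Proof. by move=> hb; field. Qed.

Lemma gen2 (F : fieldType) (a b x : F) : b != 0 -> a - (x - 1) * b != 0 ->
  - (x * (a / b + 1)) / (a / b - (x - 1)) = (- (x * (a + b))) / (a - (x - 1) * b).
Proof. by move=> hb hd; field; rewrite hd hb. Qed.

Section S2.
Variable K : closedFieldType.
Implicit Types P Q R A B C D : {poly K}.
Local Notation "x %:F" := (FracField.tofrac x).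

Lemma fracpq_neq0 A B : A != 0 -> B != 0 -> fracpq A B != 0.
Proof.
move=> hA hB; rewrite /fracpq mulf_neq0 //; first exact: tofrac_neq0.
by rewrite invr_eq0; exact: tofrac_neq0.
Qed.

Lemma phi1_frac A B : B != 0 -> A - ('X - 1) * B != 0 ->
  phi1 (Some (fracpq A B)) = Some (fracpq (- ('X * (A + B))) (A - ('X - 1) * B)).
Proof.
move=> hB hD.
have fB := tofrac_neq0 hB.
have fD := tofrac_neq0 hD.
have e1 : fracpq A B - (tK K - 1) = fracpq (A - ('X - 1) * B) B.
  rewrite /fracpq /tK (@gen1 _ _ _ _ fB).
  by rewrite tofracB tofracM tofracB tofrac1.
rewrite /phi1 e1 (negbTE (fracpq_neq0 hD hB)); congr Some.
rewrite -e1 /fracpq /tK.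
move: fD; rewrite tofracB tofracM tofracB tofrac1 => fD.
rewrite (@gen2 _ _ _ _ fB fD).
by rewrite tofracN tofracM tofracD.
Qed.

Lemma fwd P Q n : Sform P Q n ->
  Sform (- ('X * (P + Q))) (P - ('X - 1) * Q) n.+2 /\
  phi1 (Some (fracpq P Q)) = Some (fracpq (- ('X * (P + Q))) (P - ('X - 1) * Q)).
Proof.
case=> Q0 cPQ P0 [l l0 eH].
have Qz := Q0_neq0 cPQ P0.
set Q' := P - ('X - 1) * Q.
have eQ' : Q'.[0] = Q.[0] by rewrite /Q' !hornerE P0; ring.
have Q'0 : Q' != 0 by apply: contraNneq Qz => h; rewrite -eQ' h horner0.
split; last exact: phi1_frac.
split.
- exact Q'0.
- rewrite -scaleN1r coprimepZl ?oppr_eq0 ?oner_eq0 // coprimepMl; apply/andP; split.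
    by rewrite coprimep_sym coprimepX /root eQ'.
  have -> : Q' = 1 * (P + Q) + (- ('X * Q)) by rewrite /Q'; ring.
  rewrite coprimep_addl_mul -scaleN1r coprimepZr ?oppr_eq0 ?oner_eq0 // coprimepMr.
  apply/andP; split.
    by rewrite coprimepX /root !hornerE P0 add0r.
  have -> : P + Q = 1 * Q + P by ring.
  by rewrite coprimep_sym coprimep_addl_mul coprimep_sym.
- by rewrite !hornerE; ring.
- exists l; first exact l0.
  have -> : Hq (- ('X * (P + Q))) Q' = 'X^2 * Hq P Q by rewrite /Hq /Q'; ring.
  by rewrite eH -scalerAr -exprD add2n.
Qed.

Lemma fracpq_mX : fracpq (- 'X) 1 = - tK K.
Proof. by rewrite /fracpq /tK tofrac1 divr1 tofracN. Qed.

Lemma S_n2 P Q : Sform P Q 2 -> fracpq P Q = - tK K.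
Proof.
move=> S; have [Q0 _ P0 [l l0 eH]] := S.
have := Sform_size S; rewrite size_Hq //.
have sQ : (0 < size Q)%N by rewrite size_poly_gt0.
case: ifP => hle e; first by move: e; set a := size Q; lia.
have sP : size P = 2%N by move: e; set a := size P; lia.
have sQ1 : (size Q <= 1)%N by move: hle sP sQ; set a := size P; set b := size Q; lia.
have [P' eP] := rootX P0.
have P'0 : P' != 0 by apply: contra_eq_neq sP => h; rewrite eP h mulr0 size_poly0.
have sP' : (size P' <= 1)%N.
  by move: sP; rewrite eP mulrC size_mulX //; set a := size P'; lia.
move: eH; rewrite eP (size1_polyC sP') (size1_polyC sQ1).
set p1 := P'`_0; set q0 := Q`_0.
have q00 : q0 != 0.
  by apply: contra_neq Q0 => h; rewrite (size1_polyC sQ1) -/q0 h.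
move=> eH.
have e2 : 'X * (p1%:P * p1%:P * 'X + p1%:P * q0%:P + q0%:P * q0%:P) = 'X * (l *: 'X).
  by rewrite -scalerAr -expr2 -eH /Hq; ring.
have := congr1 (fun p => p.[0]) (mulXI e2); rewrite /= !hornerE => e3.
have hp : p1 = - q0.
  have : q0 * (p1 + q0) = 0 by rewrite -e3; ring.
  move/eqP; rewrite mulf_eq0 (negbTE q00) /= => /eqP hh.
  by apply/eqP; rewrite -addr_eq0 hh.
rewrite hp -fracpq_mX.
have hq : q0%:P != 0 by rewrite polyC_eq0.
have h1 : (1 : {poly K}) != 0 := oner_neq0 _.
apply/(fracpq_eq _ _ hq h1).
by rewrite polyCN; ring.
Qed.

Lemma desc P Q n : Sform P Q n.+3 ->
  exists P1 Q1, Sform P1 Q1 n.+1 /\ phi1 (Some (fracpq P1 Q1)) = Some (fracpq P Q).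
Proof.
case=> Q0 cPQ P0 [l l0 eH].
have Qz := Q0_neq0 cPQ P0.
have [P' eP] := rootX P0.
have e1 : 'X * ('X * P' * P' + P' * Q + Q * Q) = 'X * (l *: 'X^(n.+2)).
  by rewrite -scalerAr -exprS -eH /Hq eP; ring.
have e2 : P'.[0] * Q.[0] + Q.[0] * Q.[0] = 0.
  have := congr1 (fun p => p.[0]) (mulXI e1).
  rewrite /= hornerZ hornerXn exprS mul0r mulr0 !hornerE => h; rewrite -[RHS]h; ring.
have hP'0 : P'.[0] = - Q.[0].
  have : Q.[0] * (P'.[0] + Q.[0]) = 0 by rewrite -[RHS]e2; ring.
  move/eqP; rewrite mulf_eq0 (negbTE Qz) /= => /eqP hh.
  by apply/eqP; rewrite -addr_eq0 hh.
have [R eR] : exists R, P' + Q = 'X * R by apply: rootX; rewrite hornerD hP'0 addNr.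
have eQ : Q = 'X * R - P' by rewrite -eR; ring.
have p0 : P'.[0] != 0 by rewrite hP'0 oppr_eq0.
have key : Hq P Q = 'X^2 * Hq (P' - R) R by rewrite /Hq eP eQ; ring.
have X20 : ('X^2 : {poly K}) != 0 by rewrite expf_neq0 // polyX_eq0.
have eH1 : Hq (P' - R) R = l *: 'X^(n.+1).
  apply: (mulfI X20).
  by rewrite -key eH -scalerAr -exprD add2n.
have P10 : (P' - R).[0] = 0.
  have := congr1 (fun p => p.[0]) eH1.
  rewrite /Hq /= hornerZ hornerXn exprS mul0r mulr0 !hornerE.
  set p := P'.[0]; set r := R.[0] => e.
  have : (p - r) * p = 0 by rewrite -[RHS]e; ring.
  by move/eqP; rewrite mulf_eq0 (negbTE p0) orbF => /eqP.
have cop : coprimep (P' - R) R.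
  apply/coprimepP => d hd1 hd2.
  have hdP' : d %| P' by rewrite -(subrK R P'); apply: dvdp_add.
  move/coprimepP: cPQ; apply.
  - by rewrite eP; apply: dvdp_mull.
  - by rewrite eQ; apply: dvdp_sub => //; apply: dvdp_mull.
have R0 : R != 0.
  apply/negP => /eqP hR0; move: cop P10; rewrite hR0 coprimep0 -size_poly_eq1.
  case/size_poly1P => c c0 hc; rewrite hc hornerC => hc0.
  by move: c0; rewrite hc0 eqxx.
exists (P' - R), R; split.
  split => //; exists l => //.
have eD : (P' - R) - ('X - 1) * R = - Q by rewrite eQ; ring.
have D0 : (P' - R) - ('X - 1) * R != 0 by rewrite eD oppr_eq0.
rewrite phi1_frac //; congr Some.
apply/(fracpq_eq _ _ D0 Q0).
by rewrite eD eP eQ; ring.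
Qed.

Lemma fracpq0 Q : fracpq 0 Q = 0.
Proof. by rewrite /fracpq tofrac0 mul0r. Qed.

Lemma S_n0 P Q : ~ Sform P Q 0.
Proof.
move=> S; have [Q0 _ _ _] := S.
have := Sform_size S; rewrite size_Hq //.
have sQ : (0 < size Q)%N by rewrite size_poly_gt0.
move: sQ; set a := size P; set b := size Q => sQ.
case: ifP => h; lia.
Qed.

Lemma classify n P Q : Sform P Q n ->
  phi1_orbit (Some 0) (Some (fracpq P Q)) \/ phi1_orbit None (Some (fracpq P Q)).
Proof.
elim: n {-2}n (leqnn n) P Q => [|m IH] n hn P Q S.
  by move: hn S; rewrite leqn0 => /eqP ->; move/S_n0.
case: n hn S => [|[|[|k]]] hn S.
- by case: (S_n0 S).
- by left; exists 0%N; rewrite (S_n1 S) fracpq0.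
- by right; exists 1%N; rewrite (S_n2 S).
have [P1 [Q1 [S1 e]]] := desc S.
have [[j hj]|[j hj]] := IH k.+1 (ltnW hn) P1 Q1 S1.
  by left; exists j.+1; rewrite iterS hj e.
by right; exists j.+1; rewrite iterS hj e.
Qed.

Lemma Sform01 : Sform (0 : {poly K}) 1 1.
Proof.
split.
- exact: oner_neq0.
- by rewrite coprime0p eqpxx.
- by rewrite horner0.
by exists 1; [exact: oner_neq0 | rewrite /Hq scale1r expr1; ring].
Qed.

Lemma SformX : Sform (- 'X : {poly K}) 1 2.
Proof.
split.
- exact: oner_neq0.
- exact: coprimep1.
- by rewrite hornerN hornerX oppr0.
by exists 1; [exact: oner_neq0 | rewrite /Hq scale1r; ring].
Qed.

Lemma orb0 k : exists P Q, Sform P Q (k.*2.+1) /\ iter k (@phi1 K) (Some 0) = Some (fracpq P Q).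
Proof.
elim: k => [|k [P [Q [S e]]]].
  by exists 0, 1; split; [exact: Sform01 | rewrite fracpq0].
have [S' e'] := fwd S.
exists (- ('X * (P + Q))), (P - ('X - 1) * Q); split.
  by rewrite doubleS.
by rewrite iterS e e'.
Qed.

Lemma orbInf k : exists P Q, Sform P Q (k.+1.*2) /\ iter k.+1 (@phi1 K) None = Some (fracpq P Q).
Proof.
elim: k => [|k [P [Q [S e]]]].
  by exists (- 'X), 1; split; [exact: SformX | rewrite fracpq_mX].
have [S' e'] := fwd S.
exists (- ('X * (P + Q))), (P - ('X - 1) * Q); split.
  by rewrite (doubleS k.+1).
by rewrite iterS e e'.
Qed.

Lemma S_height P Q n : Sform P Q n -> has_height (Some (fracpq P Q)) (n %/ 2).
Proof.
move=> S; have [Q0 cPQ _ _] := S.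
exists P, Q; split => //.
have := Sform_size S; rewrite size_Hq //.
have sQ : (0 < size Q)%N by rewrite size_poly_gt0.
move: sQ; set a := size P; set b := size Q => sQ.
case: ifP => h; lia.
Qed.
End S2.

Section Dyn.
Variable K : closedFieldType.
Variable h2 : (2 : K) != 0.
Implicit Types c v w : K.

Lemma port0 c v : v ^+ 2 + c = v -> has_portrait (f2 c) v 0 1.
Proof.
move=> h; split => //.
- by exists 1%N.
- split => //= n; lia.
Qed.

Lemma iter_negw c w : w ^+ 2 + w + c = 0 -> forall j, iter j.+1 (f2 c) w = - w.
Proof.
move=> h; have fw : f2 c w = - w.
  by apply/eqP; rewrite -addr_eq0 /f2 addrAC h.
have fnw : f2 c (- w) = - w by rewrite {1}/f2 sqrrN; exact: fw.
elim => [|j IH]; first exact fw.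
by rewrite iterS IH fnw.
Qed.

Lemma portM c v M : let w := iter M (f2 c) v in w != 0 -> w ^+ 2 + w + c = 0 ->
  has_portrait (f2 c) v M.+1 1.
Proof.
move=> w w0 hw.
have hi := iter_negw hw.
have hM : iter M.+1 (f2 c) v = - w by rewrite iterS -/w; exact: (hi 0%N).
have hf : f2 c (- w) = - w by rewrite -(hi 0%N) -iterS hi.
split.
- by exists 1%N; split => //; rewrite hM /= hf.
- move=> m hm [n [n0 hn]].
  have e : iter n (f2 c) w = w.
    have ew : w = iter (M - m) (f2 c) (iter m (f2 c) v) by rewrite /w -iterD subnK.
    by rewrite ew -iterD addnC iterD hn.
  move: e; case: n n0 {hn} => // n _; rewrite hi => /eqP.
  rewrite eq_sym -addr_eq0 -mulr2n -mulr_natl mulf_eq0 (negbTE h2) /=.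
  by rewrite (negbTE w0).
- split => //; first by rewrite hM /= hf.
  move=> n; lia.
Qed.

Lemma port1_inv c v : has_portrait (f2 c) v 1 1 -> v != 0 /\ v ^+ 2 + v + c = 0.
Proof.
case=> _ hnp [_ hex _].
have nfv : f2 c v != v.
  by apply/eqP => e; apply: (hnp 0%N) => //; exists 1%N.
move: hex nfv; rewrite /= /f2 => hex nfv.
have [u eu] : exists u, u = v ^+ 2 + c by exists (v ^+ 2 + c).
rewrite -eu in hex nfv.
have e0 : v ^+ 2 = u ^+ 2.
  by rewrite -[u ^+ 2](addrK c) hex eu; ring.
have e1 : (v - u) * (v + u) = 0 by rewrite -subr_sqr e0 subrr.
have vu : v + u = 0.
  by move/eqP: e1; rewrite mulf_eq0 subr_eq0 eq_sym (negbTE nfv) /= => /eqP.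
split.
  apply/eqP => v0; move: nfv vu; rewrite v0 add0r => nfv vu.
  by move: nfv; rewrite vu eqxx.
by rewrite addrAC -eu addrC vu.
Qed.
End Dyn.

Lemma gen4 (F : fieldType) (p q c : F) : q != 0 ->
  (p / q) ^+ 2 + p / q + c = (p * p + p * q + c * (q * q)) / (q * q).
Proof. by move=> hq; field. Qed.

Lemma gen3 (F : fieldType) (p q c : F) : q != 0 ->
  (p / q) ^+ 2 + c - p / q = (p * p - p * q + c * (q * q)) / (q * q).
Proof. by move=> hq; field. Qed.

Lemma gen5 (F : fieldType) (p q c : F) : q != 0 ->
  (p / q) ^+ 2 + c = (p * p + c * (q * q)) / (q * q).
Proof. by move=> hq; field. Qed.

Section Real.
Variable K : closedFieldType.
Variable h2 : (2 : K) != 0.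
Implicit Types P Q R G : {poly K}.

Lemma Hq_eval P Q c : (Hq P Q).[c] = P.[c] * P.[c] + P.[c] * Q.[c] + c * (Q.[c] * Q.[c]).
Proof. by rewrite /Hq !hornerE. Qed.

Lemma Qc_of_root P Q c : coprimep P Q -> root (Hq P Q) c -> Q.[c] != 0.
Proof.
move=> cPQ rc; apply/eqP => Qc0.
have : root P c.
  by move: rc; rewrite /root Hq_eval Qc0 !mulr0 !addr0 mulf_eq0 orbb.
by move/(coprimep_root cPQ); rewrite Qc0 eqxx.
Qed.

Lemma prod_zero (rs : seq K) : (forall z, z \in rs -> z = 0) ->
  \prod_(z <- rs) ('X - z%:P) = 'X^(size rs).
Proof.
elim: rs => [|z rs IH] hrs; first by rewrite big_nil expr0.
rewrite big_cons IH; last by move=> y yin; apply: hrs; rewrite inE yin orbT.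
by rewrite (hrs z (mem_head _ _)) subr0 exprS.
Qed.

Lemma extractS P Q : Q != 0 -> coprimep P Q ->
  (forall c, root (Hq P Q) c -> P.[c] = 0) -> exists n, Sform P Q n.
Proof.
move=> Q0 cPQ hr.
have z0 : forall c, root (Hq P Q) c -> c = 0.
  move=> c rc; have Pc := hr c rc; have Qc := Qc_of_root cPQ rc.
  move: rc; rewrite /root Hq_eval Pc !mul0r !add0r mulf_eq0 mulf_eq0 orbb.
  by rewrite (negbTE Qc) orbF => /eqP.
have sH : size (Hq P Q) != 1%N.
  rewrite size_Hq //.
  have sQ : (0 < size Q)%N by rewrite size_poly_gt0.
  move: sQ; set a := size P; set b := size Q => sQ.
  by case: ifP => h; apply/eqP; lia.
have H0 : Hq P Q != 0.
  apply/eqP => h; have := z0 1; rewrite /root h horner0 eqxx => /(_ isT) /eqP.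
  by rewrite oner_eq0.
have [rs ers] := closed_field_poly_normal (Hq P Q).
have hrs : forall z, z \in rs -> z = 0.
  move=> z zin; apply: z0.
  rewrite ers rootZ; first by rewrite root_prod_XsubC.
  by rewrite lead_coef_eq0.
exists (size rs); split => //.
- have [c rc] := closed_rootP _ sH.
  by have := hr c rc; rewrite (z0 c rc).
- exists (lead_coef (Hq P Q)); first by rewrite lead_coef_eq0.
  by rewrite {1}ers prod_zero.
Qed.

Lemma Hq_value P Q c : Q.[c] != 0 ->
  (P.[c] / Q.[c]) ^+ 2 + P.[c] / Q.[c] + c = (Hq P Q).[c] / (Q.[c] * Q.[c]).
Proof. by move=> Qc; rewrite gen4 // Hq_eval. Qed.

Lemma real_M1 (a : Kt K) : ~ realizes a 1 1 ->
  phi1_orbit (Some 0) (Some a) \/ phi1_orbit None (Some a).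
Proof.
have [P [Q [Q0 cPQ ->]]] := crep a; move=> nr.
case: (classic (exists c, root (Hq P Q) c /\ P.[c] != 0)) => [[c [rc Pc]]|hn].
  exfalso; apply: nr.
  have Qc := Qc_of_root cPQ rc.
  exists c, (P.[c] / Q.[c]); split; first by exists P, Q.
  apply: (@portM _ h2 c _ 0%N) => /=.
    by rewrite mulf_neq0 // invr_eq0.
  by rewrite Hq_value // (eqP rc) mul0r.
have [n S] : exists n, Sform P Q n.
  apply: extractS => // c rc; apply/eqP; apply/negPn/negP => Pc.
  by apply: hn; exists c.
exact: classify S.
Qed.

Lemma notreal_S P Q n : Sform P Q n.+1 -> ~ realizes (fracpq P Q) 1 1.
Proof.
move=> [Q0 cPQ P0 [l l0 eH]] [c [v [ev hp]]].
have [Qc ev'] := eval_crep Q0 cPQ (erefl _) ev.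
have [v0 hv] := port1_inv hp.
have hc : (Hq P Q).[c] = 0.
  move: hv; rewrite ev' Hq_value // => /eqP.
  rewrite mulf_eq0 invr_eq0 mulf_eq0 orbb (negbTE Qc) orbF.
  by move/eqP.
move: hc; rewrite eH hornerZ hornerXn => /eqP; rewrite mulf_eq0 (negbTE l0) expf_eq0 /=.
move=> /eqP c0; move: v0; rewrite ev' c0 P0 mul0r.
by rewrite eqxx.
Qed.

Lemma orbit_notreal (a : Kt K) : phi1_orbit (Some 0) (Some a) \/ phi1_orbit None (Some a) ->
  ~ realizes a 1 1.
Proof.
case=> [[k hk]|[[|k] hk]].
- have [P [Q [S e]]] := orb0 K k.
  move: hk; rewrite e => -[<-]; exact: notreal_S S.
- discriminate hk.
- have [P [Q [S e]]] := orbInf K k.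
  move: hk; rewrite e => -[<-].
  by move: S; rewrite doubleS => S; exact: notreal_S S.
Qed.

Lemma real0 (a : Kt K) : realizes a 0 1.
Proof.
have [P [Q [Q0 cPQ ->]]] := crep a.
set H0 := P * P + - (P * Q) + 'X * (Q * Q).
have sH : size H0 != 1%N.
  rewrite /H0 size_H //; last by rewrite size_opp size_mul_leq.
  have sQ : (0 < size Q)%N by rewrite size_poly_gt0.
  move: sQ; set x := size P; set y := size Q => sQ.
  by case: ifP => h; apply/eqP; lia.
have [c rc] := closed_rootP _ sH.
have ev : H0.[c] = P.[c] * P.[c] - P.[c] * Q.[c] + c * (Q.[c] * Q.[c]).
  by rewrite /H0 !hornerE.
have Qc : Q.[c] != 0.
  apply/eqP => Qc0.
  have : root P c.
    by move: rc; rewrite /root ev Qc0 !mulr0 subr0 addr0 mulf_eq0 orbb.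
  by move/(coprimep_root cPQ); rewrite Qc0 eqxx.
exists c, (P.[c] / Q.[c]); split; first by exists P, Q.
apply: (port0 h2); apply/eqP; rewrite -subr_eq0 gen3 // -ev (eqP rc) mul0r.
by [].
Qed.

Lemma noS_sq G R n : ~ Sform (G * G + 'X * (R * R)) (R * R) n.
Proof.
move=> S; have [Q0 cPQ P0 [l l0 eH]] := S.
have Qz := Q0_neq0 cPQ P0.
have Rz : R.[0] != 0 by apply: contraNneq Qz; rewrite hornerM => ->; rewrite mulr0.
have G0 : G.[0] = 0.
  have : G.[0] * G.[0] = 0 by rewrite -[RHS]P0 !hornerE; ring.
  by move/eqP; rewrite mulf_eq0 orbb => /eqP.
have [G1 eG] := rootX G0.
set K1 := 'X * ('X * G1 * G1 + R * R) * ('X * G1 * G1 + R * R)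
        + ('X * G1 * G1 + R * R) * (R * R) + (R * R) * (R * R).
have key : Hq (G * G + 'X * (R * R)) (R * R) = 'X * K1 by rewrite /Hq /K1 eG; ring.
have K10 : K1.[0] = 2 * R.[0] ^+ 4.
  by rewrite /K1 !(hornerD, hornerM, hornerX); ring.
rewrite key in eH.
case: n S eH => [|[|m]] S eH.
- move: eH; rewrite expr0 => eH.
  have := congr1 (fun p => p.[0]) eH; rewrite /= hornerM hornerX mul0r alg_polyC hornerC.
  by move/esym/eqP; rewrite (negbTE l0).
- have := S_n1 S; rewrite eG => e.
  have e' : 'X * ('X * G1 * G1 + R * R) = 'X * 0 by rewrite mulr0 -[RHS]e; ring.
  have := congr1 (fun p => p.[0]) (mulXI e'); rewrite /= !(hornerD, hornerM, hornerX) horner0 !mul0r add0r.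
  by move/eqP; rewrite mulf_eq0 orbb (negbTE Rz).
- have e' : 'X * K1 = 'X * (l *: 'X^(m.+1)) by rewrite eH -scalerAr -exprS.
  have := congr1 (fun p => p.[0]) (mulXI e'); rewrite /= K10 hornerZ hornerXn expr0n /= mulr0.
  by move/eqP; rewrite mulf_eq0 (negbTE h2) expf_eq0 (negbTE Rz) andbF.
Qed.

Fixpoint itp (P Q : {poly K}) (j : nat) : {poly K} * {poly K} :=
  if j is j'.+1 then
    let pq := itp P Q j' in (pq.1 * pq.1 + 'X * (pq.2 * pq.2), pq.2 * pq.2)
  else (P, Q).

Lemma itp_prop P Q j : Q != 0 -> coprimep P Q ->
  [/\ (itp P Q j).2 != 0, coprimep (itp P Q j).1 (itp P Q j).2 &
      forall c, Q.[c] != 0 -> (itp P Q j).2.[c] != 0 /\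
        iter j (f2 c) (P.[c] / Q.[c]) = (itp P Q j).1.[c] / (itp P Q j).2.[c]].
Proof.
move=> Q0 cPQ; elim: j => [|j [IH1 IH2 IH3]] /=; first by split => // c Qc.
move: IH1 IH2 IH3.
set G := (itp P Q j).1; set R := (itp P Q j).2 => IH1 IH2 IH3.
have cRG : coprimep R G by rewrite coprimep_sym.
split.
- by rewrite mulf_neq0.
- by rewrite coprimep_sym addrC coprimep_addl_mul coprimepMl !coprimepMr cRG.
- move=> c Qc; have [Rc e] := IH3 c Qc.
  split; first by rewrite hornerM mulf_neq0.
  rewrite e /f2 gen5 //.
  by rewrite !(hornerD, hornerM, hornerX).
Qed.

Lemma itp_Q0 P Q j c : Q.[c] = 0 -> (itp P Q j).2.[c] = 0.
Proof.
move=> h; elim: j => [|j IH] //=.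
by rewrite hornerM IH mul0r.
Qed.

Lemma real_M2 (a : Kt K) M : realizes a M.+2 1.
Proof.
have [P0 [Q0 [Q00 c0 ->]]] := crep a.
have [A1 A2 A3] := itp_prop M.+1 Q00 c0.
have Q0c : forall c, (itp P0 Q0 M.+1).2.[c] != 0 -> Q0.[c] != 0.
  by move=> c; apply: contraNneq => h; rewrite (itp_Q0 _ _ h).
move: A1 A2 A3 Q0c.
set P := (itp P0 Q0 M.+1).1; set Q := (itp P0 Q0 M.+1).2 => A1 A2 A3 Q0c.
have [c [rc Pc]] : exists c, root (Hq P Q) c /\ P.[c] != 0.
  apply: NNPP => hn.
  have [n S] : exists n, Sform P Q n.
    apply: extractS => // c rc; apply/eqP; apply/negPn/negP => Pc.
    by apply: hn; exists c.
  by move: S; rewrite /P /Q /=; apply: noS_sq.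
have Qc := Qc_of_root A2 rc.
have Q0c' := Q0c c Qc.
have [_ ev] := A3 c Q0c'.
exists c, (P0.[c] / Q0.[c]); split; first by exists P0, Q0.
apply: (@portM _ h2 c _ M.+1) => /=.
  by rewrite -iterS ev mulf_neq0 // invr_eq0.
by rewrite -iterS ev Hq_value // (eqP rc) mul0r.
Qed.
End Real.

Unset Implicit Arguments.

Theorem proposition5p18 (K : closedFieldType) (hchar : [pchar K] =i pred0) :
  (forall (alpha : Kt K) (M : nat),
      ~ realizes alpha M 1 <->
      (M = 1%N /\ (phi1_orbit (Some 0) (Some alpha)
                   \/ phi1_orbit None (Some alpha))))
  /\ (forall k : nat,
        has_height (iter k (@phi1 K) (Some 0)) k
        /\ has_height (iter k (@phi1 K) None) k).
Proof.
have h2 : (2 : K) != 0 by rewrite (proj1 (pcharf0P _) hchar 2).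
split.
- move=> alpha M; split.
  + case: M => [|[|M]] nr.
    * by exfalso; apply: nr; exact: (real0 h2 alpha).
    * by split => //; exact: (real_M1 h2 nr).
    * by exfalso; apply: nr; exact: (real_M2 h2 alpha M).
  + by case=> -> ho; exact: (orbit_notreal ho).
- move=> k; split.
  + have [P [Q [S e]]] := orb0 K k.
    rewrite e; have := S_height S.
    by have -> : (k.*2.+1 %/ 2 = k)%N by lia.
  + case: k => [|k]; first by [].
    have [P [Q [S e]]] := orbInf K k.
    rewrite e; have := S_height S.
    by have -> : (k.+1.*2 %/ 2 = k.+1)%N by lia.
Qed.
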